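(* Let $Q^n$ and $Q^{n-1}$ be matrix-valued grid functions satisfying the boundary conditions whose values are symmetric and trace-free, and let $r^n$ be a real grid function. Suppose that $Q^{n+1}$ (a grid function of real $3\times3$ matrices satisfying the boundary conditions) and $r^{n+1}$ (a real grid function) satisfy, for all $(i,j,k)\in\{1,\dots,N\}^3$, $\frac{Q^{n+1}_{ijk}-Q^n_{ijk}}{\Delta t}=M\Big(L_1\Delta_hQ^{n+\frac12}_{ijk}-r^{n+\frac12}_{ijk}\overline P^{n+\frac12}_{ijk}+\frac{L_2+L_3}{2}\cdot\frac{\alpha_h(Q^{n+1})_{ijk}+\alpha_h(Q^n)_{ijk}}{2}\Big)$ and $r^{n+1}_{ijk}-r^n_{ijk}=\overline P^{n+\frac12}_{ijk}:(Q^{n+1}_{ijk}-Q^n_{ijk})$, where $f^{n+\frac12}=\frac12(f^{n+1}+f^n)$ and $\overline P^{n+\frac12}_{ijk}=\frac32P(Q^n_{ijk})-\frac12P(Q^{n-1}_{ijk})$. Then $Q^{n+1}_{ijk}$ is symmetric and trace-free for all $(i,j,k)$.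
   Context: Parameters: $a,b\in\mathbb{R}$, $c,L_1,L_2,L_3,M>0$, $\Delta t>0$, and $A_0>0$ such that $\inf\{\frac a2\operatorname{tr}(Q^2)-\frac b3\operatorname{tr}(Q^3)+\frac c4(\operatorname{tr}(Q^2))^2+A_0:\ Q\in\mathbb{R}^{3\times3}\text{ symmetric}\}>0$. For symmetric $Q$ let $r(Q)=\sqrt{2(\frac a2\operatorname{tr}(Q^2)-\frac b3\operatorname{tr}(Q^3)+\frac c4(\operatorname{tr}(Q^2))^2+A_0)}$, $S(Q)=aQ-b(Q^2-\frac13\operatorname{tr}(Q^2)I)+c\operatorname{tr}(Q^2)Q$, $P(Q)=S(Q)/r(Q)$; $A:B=\sum_{i,j}A_{ij}B_{ij}$. Grid: $N\in\mathbb{N}$, $h=1/(N+1)$. Grid functions are families $(f_{ijk})_{(i,j,k)\in\mathbb{Z}^3}$ of scalars or real $3\times3$ matrices; the boundary conditions mean $f_{ijk}=0$ whenever $(i,j,k)\notin\{1,\dots,N\}^3$. $D^\pm_1f_{ijk}=\pm(f_{i\pm1,j,k}-f_{ijk})/h$, $D^c_1f_{ijk}=(f_{i+1,j,k}-f_{i-1,j,k})/(2h)$, and analogously $D^\pm_2,D^c_2$ (shift in $j$), $D^\pm_3,D^c_3$ (shift in $k$). $\Delta_hf=\sum_{\alpha=1}^3D^-_\alpha D^+_\alpha f$, $\alpha_h(Q)_{ws}=\sum_{\beta=1}^3[D^c_wD^c_\beta Q_{s\beta}+D^c_sD^c_\beta Q_{w\beta}]-\frac23\sum_{\beta,\gamma=1}^3D^c_\beta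 D^c_\gamma Q_{\beta\gamma}\delta_{ws}$. *)

(* Defs.v *)
From HB Require Import structures.
From mathcomp Require Import all_boot all_order all_algebra.
From mathcomp Require Import classical_sets reals.
Set Implicit Arguments. Unset Strict Implicit. Unset Printing Implicit Defensive.
Import Order.TTheory GRing.Theory Num.Theory.
Local Open Scope ring_scope.

Section Grid.
Variable R : realType.

Definition gridfun (V : Type) := int -> int -> int -> V.

Definition in_range (N : nat) (i : int) : bool := (1 <= i) && (i <= N%:Z).
Definition in_grid (N : nat) (i j k : int) : bool :=
  [&& in_range N i, in_range N j & in_range N k].
Definition bc {V : zmodType} (N : nat) (f : gridfun V) : Prop :=
  forall i j k, ~~ in_grid N i j k -> f i j k = 0.

Definition meshsize (N : nat) : R := (N.+1%:R)^-1.

(* shift by s in direction al (al = 0,1,2 corresponds to directions 1,2,3) *)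
Definition shift {V : Type} (al : 'I_3) (s : int) (f : gridfun V) : gridfun V :=
  fun i j k =>
    if val al == 0%N then f (i + s) j k
    else if val al == 1%N then f i (j + s) k
    else f i j (k + s).

Variable V : lmodType R.

Definition Dp (N : nat) (al : 'I_3) (f : gridfun V) : gridfun V :=
  fun i j k => (meshsize N)^-1 *: (shift al 1 f i j k - f i j k).
Definition Dm (N : nat) (al : 'I_3) (f : gridfun V) : gridfun V :=
  fun i j k => (meshsize N)^-1 *: (f i j k - shift al (-1) f i j k).
Definition Dc (N : nat) (al : 'I_3) (f : gridfun V) : gridfun V :=
  fun i j k => (2 * meshsize N)^-1 *: (shift al 1 f i j k - shift al (-1) f i j k).

Definition lap_h (N : nat) (f : gridfun V) : gridfun V :=
  fun i j k => \sum_(al < 3) Dm N al (Dp N al f) i j k.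

End Grid.

Section Alpha.
Variable R : realType.

Definition comp (Q : gridfun 'M[R]_3) (s b : 'I_3) : gridfun R :=
  fun i j k => Q i j k s b.

Definition alpha_h (N : nat) (Q : gridfun 'M[R]_3) : gridfun 'M[R]_3 :=
  fun i j k => \matrix_(w < 3, s < 3)
    ((\sum_(be < 3) (Dc (V := R^o) N w (Dc (V := R^o) N be (comp Q s be)) i j k
                   + Dc (V := R^o) N s (Dc (V := R^o) N be (comp Q w be)) i j k))
     - 2 / 3 * (\sum_(be < 3) \sum_(ga < 3)
                   Dc (V := R^o) N be (Dc (V := R^o) N ga (comp Q be ga)) i j k)
       * (w == s)%:R).

Definition bulk (a b c A0 : R) (Q : 'M[R]_3) : R :=
  a / 2 * \tr (Q *m Q) - b / 3 * \tr (Q *m Q *m Q) + c / 4 * (\tr (Q *m Q)) ^+ 2 + A0.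
Definition rfun (a b c A0 : R) (Q : 'M[R]_3) : R := Num.sqrt (2 * bulk a b c A0 Q).
Definition Sfun (a b c : R) (Q : 'M[R]_3) : 'M[R]_3 :=
  a *: Q - b *: (Q *m Q - (1/3 * \tr (Q *m Q)) *: 1%:M) + (c * \tr (Q *m Q)) *: Q.
Definition Pfun (a b c A0 : R) (Q : 'M[R]_3) : 'M[R]_3 :=
  (rfun a b c A0 Q)^-1 *: Sfun a b c Q.

Definition frob (A B : 'M[R]_3) : R := \sum_(i < 3) \sum_(j < 3) A i j * B i j.

Definition symtf (Q : 'M[R]_3) : Prop := Q^T = Q /\ \tr Q = 0.

End Alpha.

(* Main.v *)
Require Import Defs.
From HB Require Import structures.
From mathcomp Require Import all_boot all_order all_algebra.
From mathcomp Require Import classical_sets reals.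
From mathcomp Require Import ring lra.
Import Order.TTheory GRing.Theory Num.Theory.
Local Open Scope ring_scope.
From mathcomp Require Import boolp.

Lemma lapE (R : realType) (N : nat) (u : gridfun R) i j k :
  lap_h (V:=R^o) N u i j k = (meshsize R N)^-1 * (meshsize R N)^-1 *
   (u (i+1) j k + u (i-1) j k + u i (j+1) k + u i (j-1) k + u i j (k+1) + u i j (k-1) - 6 * u i j k).
Proof.
rewrite /lap_h !big_ord_recr big_ord0 /= /Dm /Dp /shift /= !addrNK.
rewrite /GRing.scale /=.
set h := meshsize R N.
ring.
Qed.

Lemma seq_argmax (R : realType) (T : eqType) (F : T -> R) (x0 : T) (s : seq T) :
  exists2 x, x \in x0 :: s & forall y, y \in x0 :: s -> F y <= F x.
Proof.
elim: s => [|y s [x hx hmax]].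
  by exists x0 => [|y]; rewrite ?inE // => /eqP ->.
case: (lerP (F y) (F x)) => hyx.
  exists x; first by move: hx; rewrite !inE => /orP [->|->]; rewrite ?orbT.
  move=> z; rewrite !inE => /or3P [/eqP ->|/eqP ->|hz]; first exact: hmax (mem_head _ _).
    done.
  by apply: hmax; rewrite inE hz orbT.
exists y; first by rewrite !inE eqxx orbT.
move=> z; rewrite !inE => /or3P [/eqP ->|/eqP ->|hz] //.
  by apply: le_trans (ltW hyx); apply: hmax; rewrite inE eqxx.
by apply: le_trans (ltW hyx); apply: hmax; rewrite inE hz orbT.
Qed.

Lemma maxp (R : realType) (N : nat) (u : gridfun R) (kap : R) : 0 <= kap -> bc N u ->
  (forall i j k, in_grid N i j k -> u i j k = kap * lap_h (V:=R^o) N u i j k) ->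
  forall i j k, u i j k = 0.
Proof.
move=> hk hbc heq.
pose T := ('I_N.+1 * 'I_N.+1 * 'I_N.+1)%type.
pose G (p : T) : R := `|u (p.1.1 : nat)%:Z (p.1.2 : nat)%:Z (p.2 : nat)%:Z|.
have [[[p1 p2] p3] _ hp] := @seq_argmax R _ G (ord0, ord0, ord0) (enum {: T}).
set p := (p1, p2, p3) in hp.
have hall : forall i j k, `|u i j k| <= G p.
  move=> i j k; case hg: (in_grid N i j k); last first.
    by rewrite hbc ?hg // normr0 /G normr_ge0.
  move: hg; rewrite /in_grid /in_range => /and3P [/andP [hi1 hi2] /andP [hj1 hj2] /andP [hk1 hk2]].
  have ei : i = (`|i|%N)%:Z by rewrite abszE ger0_norm // (le_trans _ hi1).
  have ej : j = (`|j|%N)%:Z by rewrite abszE ger0_norm // (le_trans _ hj1).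
  have ek : k = (`|k|%N)%:Z by rewrite abszE ger0_norm // (le_trans _ hk1).
  have li : (`|i| < N.+1)%N by rewrite ltnS -lez_nat -ei.
  have lj : (`|j| < N.+1)%N by rewrite ltnS -lez_nat -ej.
  have lk : (`|k| < N.+1)%N by rewrite ltnS -lez_nat -ek.
  have := hp (Ordinal li, Ordinal lj, Ordinal lk).
  by rewrite inE mem_enum orbT /G /= -ei -ej -ek => /(_ isT).
set m := G p in hall.
have m0 : 0 <= m by rewrite /m /G normr_ge0.
suff : m <= 0.
  by move=> hm i j k; apply/normr0_eq0/le_anti; rewrite normr_ge0 (le_trans (hall i j k) hm).
rewrite /m /G /= in hall m0 *.
set pi := (p1 : nat)%:Z; set pj := (p2 : nat)%:Z; set pk := (p3 : nat)%:Z.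
case hg: (in_grid N pi pj pk); last by rewrite hbc ?hg // normr0.
have := heq _ _ _ hg; rewrite lapE.
set h := meshsize R N.
set S := (X in h^-1 * h^-1 * X).
move=> e.
have hS : `|S + 6 * u pi pj pk| <= 6 * `|u pi pj pk|.
  rewrite /S addrNK.
  set a1 := u (pi+1) pj pk; set a2 := u (pi-1) pj pk; set a3 := u pi (pj+1) pk.
  set a4 := u pi (pj-1) pk; set a5 := u pi pj (pk+1); set a6 := u pi pj (pk-1).
  have t : `|a1+a2+a3+a4+a5+a6| <= `|a1|+`|a2|+`|a3|+`|a4|+`|a5|+`|a6|.
    by do 4 (apply: le_trans (ler_normD _ _) _; rewrite lerD2r); apply: ler_normD.
  have := hall (pi+1) pj pk; have := hall (pi-1) pj pk; have := hall pi (pj+1) pk.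
  have := hall pi (pj-1) pk; have := hall pi pj (pk+1); have := hall pi pj (pk-1).
  rewrite -/a1 -/a2 -/a3 -/a4 -/a5 -/a6; lra.
set kk := kap * (h^-1 / h).
have kk0 : 0 <= kk by rewrite /kk mulr_ge0 // mulr_ge0 // invr_ge0 /h /meshsize invr_ge0 ler0n.
have e2 : u pi pj pk * (1 + 6 * kk) = kk * (S + 6 * u pi pj pk).
  by rewrite mulrDr mulr1 !e /kk; ring.
have e3 : `|u pi pj pk| * (1 + 6 * kk) = kk * `|S + 6 * u pi pj pk|.
  by rewrite -[kk in RHS](ger0_norm kk0) -normrM -e2 normrM (ger0_norm (_ : 0 <= 1 + 6*kk)) //; lra.
have := ler_wpM2l kk0 hS.
rewrite -e3. nra.
Qed.

Lemma lap_lin (R : realType) (V : lmodType R) (N : nat) (phi : V -> R)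
  (hD : forall x y, phi (x + y) = phi x + phi y)
  (hZ : forall (a : R) x, phi (a *: x) = a * phi x)
  (f : gridfun V) i j k :
  phi (lap_h N f i j k) = lap_h (V:=R^o) N (fun i j k => phi (f i j k)) i j k.
Proof.
have h0 : phi 0 = 0.
  by have := hD 0 0; rewrite addr0 => e; lra.
have hB : forall x y, phi (x - y) = phi x - phi y.
  by move=> x y; rewrite hD -scaleN1r hZ; ring.
have hDp : forall al i j k, phi (Dp N al f i j k) = Dp (V:=R^o) N al (fun i j k => phi (f i j k)) i j k.
  move=> al i' j' k'; rewrite /Dp hZ hB /shift.
  by case: ifP => _; [|case: ifP => _].
rewrite /lap_h (big_morph phi hD h0); apply: eq_bigr => al _.
rewrite /Dm hZ hB hDp /shift.
by case: ifP => _; [|case: ifP => _]; rewrite hDp.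
Qed.

Lemma alpha_sym (R : realType) N (Q : gridfun 'M[R]_3) i j k s t :
  alpha_h N Q i j k s t - alpha_h N Q i j k t s = 0.
Proof.
rewrite /alpha_h !mxE eq_sym big_split [X in _ - (X - _)]big_split /=.
ring.
Qed.

Lemma alpha_tr (R : realType) N (Q : gridfun 'M[R]_3) i j k :
  \tr (alpha_h N Q i j k) = 0.
Proof.
rewrite /alpha_h /mxtrace.
under eq_bigr do rewrite mxE eqxx mulr1 big_split.
rewrite sumrB big_split /= sumr_const card_ord -[X in _ - X]mulr_natr.
set T := \sum_(x < 3) \sum_(y < 3) Dc (V:=R^o) N x (Dc (V:=R^o) N y (Defs.comp Q x y)) i j k.
have h : forall x : R, x + x - 2/3*x*3 = 0 by move=> x; field.
exact: h.
Qed.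

Lemma Pfun_sym (R : realType) a b c A0 (Q : 'M[R]_3) : Q^T = Q -> (Pfun a b c A0 Q)^T = Pfun a b c A0 Q.
Proof.
move=> hQ; rewrite /Pfun [(_ *: _)^T]linearZ /=; congr (_ *: _); rewrite /Sfun.
rewrite [(_ + _)^T]linearD /= [(_ - _)^T]linearB /= ![(_ *: _)^T]linearZ /= [(_ - _)^T]linearB /=.
by rewrite [(_ *: _)^T]linearZ /= trmx_mul tr_scalar_mx hQ.
Qed.

Lemma Pfun_tr (R : realType) a b c A0 (Q : 'M[R]_3) : \tr Q = 0 -> \tr (Pfun a b c A0 Q) = 0.
Proof.
move=> hQ; rewrite /Pfun /Sfun !(mxtraceD, mxtraceZ).
rewrite ![\tr (- _)]linearN /= !(mxtraceD, mxtraceZ) hQ -scaleNr mxtraceZ mxtrace1.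
rewrite [X in _ * X](_ : _ = 0) ?mulr0 //. move: (\tr (Q *m Q)) => T. by field.
Qed.

Local Open Scope classical_set_scope.

Theorem proposition4p4 (R : realType) (a b c L1 L2 L3 M dt A0 : R)
  (hc : 0 < c) (hL1 : 0 < L1) (hL2 : 0 < L2) (hL3 : 0 < L3) (hM : 0 < M)
  (hdt : 0 < dt) (hA0 : 0 < A0)
  (hinf : 0 < inf [set bulk a b c A0 Q | Q in [set Q : 'M[R]_3 | Q^T = Q]])
  (N : nat)
  (Qn Qnm1 Qn1 : gridfun 'M[R]_3) (rn rn1 : gridfun R)
  (bcQn : bc N Qn) (bcQnm1 : bc N Qnm1) (bcQn1 : bc N Qn1)
  (stQn : forall i j k, symtf (Qn i j k))
  (stQnm1 : forall i j k, symtf (Qnm1 i j k))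
  (eqQ : forall i j k, in_grid N i j k ->
     dt^-1 *: (Qn1 i j k - Qn i j k) =
     M *: (L1 *: lap_h N (fun i j k => 2^-1 *: (Qn1 i j k + Qn i j k)) i j k
           - (2^-1 * (rn1 i j k + rn i j k)) *:
               (3/2 *: Pfun a b c A0 (Qn i j k) - 1/2 *: Pfun a b c A0 (Qnm1 i j k))
           + ((L2 + L3) / 2) *: (2^-1 *: (alpha_h N Qn1 i j k + alpha_h N Qn i j k))))
  (eqr : forall i j k, in_grid N i j k ->
     rn1 i j k - rn i j k =
     frob (3/2 *: Pfun a b c A0 (Qn i j k) - 1/2 *: Pfun a b c A0 (Qnm1 i j k))
          (Qn1 i j k - Qn i j k)) :
  forall i j k, symtf (Qn1 i j k).
Proof.
have key : forall phi : 'M[R]_3 -> R,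
    (forall x y, phi (x + y) = phi x + phi y) ->
    (forall (e : R) x, phi (e *: x) = e * phi x) ->
    (forall i j k, phi (Qn i j k) = 0) ->
    (forall i j k, phi (Pfun a b c A0 (Qn i j k)) = 0) ->
    (forall i j k, phi (Pfun a b c A0 (Qnm1 i j k)) = 0) ->
    (forall Q i j k, phi (alpha_h N Q i j k) = 0) ->
    forall i j k, phi (Qn1 i j k) = 0.
  move=> phi hD hZ h1 h2 h3 h4.
  have h0 : phi 0 = 0 by have := hD 0 0; rewrite addr0 => e; lra.
  have hB : forall x y, phi (x - y) = phi x - phi y.
    by move=> x y; rewrite hD -scaleN1r hZ; ring.
  apply: (@maxp R N (fun i j k => phi (Qn1 i j k)) (dt * M * L1 / 2)).
  - by apply: divr_ge0 => //; apply: mulr_ge0; [apply: mulr_ge0|]; apply: ltW.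
  - by move=> i j k hg; rewrite /= bcQn1.
  move=> i j k hg; have := congr1 phi (eqQ i j k hg).
  have hN : forall x, phi (- x) = - phi x by move=> x; rewrite -scaleN1r hZ mulN1r.
  move: (Pfun a b c A0 (Qn i j k)) (h2 i j k) => P2 hP2.
  move: (Pfun a b c A0 (Qnm1 i j k)) (h3 i j k) => P3 hP3.
  move: (alpha_h N Qn1 i j k) (h4 Qn1 i j k) => A1 hA1.
  move: (alpha_h N Qn i j k) (h4 Qn i j k) => A2 hA2.
  rewrite !(hD, hZ, hN) hP2 hP3 hA1 hA2 h1 (lap_lin _ _ _ _ hD hZ).
  have -> : (fun i j k => phi (2^-1 *: (Qn1 i j k + Qn i j k))) =
            (fun i j k => 2^-1 * phi (Qn1 i j k)).
    by apply/funext => x; apply/funext => y; apply/funext => z; rewrite hZ hD h1 addr0.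
  have := @lap_lin R R^o N (fun x => 2^-1 * x) (fun x y => mulrDr _ x y)
            (fun e x => mulrCA _ e x) (fun i j k => phi (Qn1 i j k)) i j k.
  move=> /= <-.
  set u := phi (Qn1 i j k); set L := lap_h _ _ _ _ _.
  rewrite subr0 => e.
  have -> : u = dt * (dt^-1 * u) by rewrite mulrA mulfV ?mul1r // gt_eqF.
  rewrite e; clear e; move: L => L; rewrite !(mul0r, mulr0, subrr, addr0, subr0). by rewrite !mulrA.
move=> i j k; split.
  apply/matrixP => s t; rewrite mxE; apply/eqP; rewrite -subr_eq0; apply/eqP.
  apply: (key (fun X => X t s - X s t)).
  - by move=> x y; rewrite !mxE; ring.
  - by move=> e x; rewrite !mxE; ring.
  - by move=> i' j' k'; rewrite -{1}(stQn i' j' k').1 mxE subrr.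
  - by move=> i' j' k'; rewrite -{1}(Pfun_sym _ a b c A0 _ (stQn i' j' k').1) mxE subrr.
  - by move=> i' j' k'; rewrite -{1}(Pfun_sym _ a b c A0 _ (stQnm1 i' j' k').1) mxE subrr.
  - by move=> Q i' j' k'; apply: alpha_sym.
apply: (key (fun X => \tr X)).
- by move=> x y; rewrite mxtraceD.
- by move=> e x; rewrite mxtraceZ.
- by move=> i' j' k'; rewrite (stQn i' j' k').2.
- by move=> i' j' k'; rewrite Pfun_tr // (stQn i' j' k').2.
- by move=> i' j' k'; rewrite Pfun_tr // (stQnm1 i' j' k').2.
- by move=> Q i' j' k'; apply: alpha_tr.
Qed.
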